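(* Let $f=\min\{0,X,Y,X+Y\}$. Then for all $N\ge1$, $\dim(U_N)\ge N\cdot\lfloor N/2\rfloor$, and consequently the entropy $H(f)=\lim_{N\to\infty}\dim(U_N)/N^2$ satisfies $H(f)\ge 1/2$; in particular $H(f)>0$.
   Context: For a tropical polynomial $f=\min_{1\le j\le m}\{a_j+t_{j,1}X+t_{j,2}Y\}$ (here $a_j=0$ and exponents $(0,0),(1,0),(0,1),(1,1)$) and $N\ge1$, let $T_N=\{0,\dots,N-1\}^2$ and consider variables $u(k_1,k_2)$, $(k_1,k_2)\in T_N$. For each shift $(s_1,s_2)\in\mathbb{Z}^2$ with all $(t_{j,1}+s_1,t_{j,2}+s_2)\in T_N$, the linearization is $\min_j\{a_j+u(t_{j,1}+s_1,t_{j,2}+s_2)\}$, satisfied by $u$ if the minimum is attained at least twice. $U_N\subset\mathbb{R}^{N^2}$ is the set of points satisfying all these linearizations (a finite union of convex polyhedra), $\dim$ is its dimension, and the entropy is $H(f)=\lim_{N\to\infty}\dim(U_N)/N^2$. *)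

(* Defs.v *)
From HB Require Import structures.
From mathcomp Require Import all_boot all_order all_algebra.
From mathcomp Require Import all_classical all_reals all_analysis.
Set Implicit Arguments. Unset Strict Implicit. Unset Printing Implicit Defensive.
Import Order.TTheory GRing.Theory Num.Theory.
Local Open Scope ring_scope.
Local Open Scope classical_set_scope.

Section Tropical.
Variable R : realType.

(* A tropical polynomial min_j {a_j + t_{j,1} X + t_{j,2} Y}, as the list of
   its terms (a_j, (t_{j,1}, t_{j,2})). *)
Definition tpoly := seq (R * (int * int)).

Definition inT (N : nat) (k : int * int) : bool :=
  [&& 0 <= k.1, k.1 < N%:Z, 0 <= k.2 & k.2 < N%:Z].

Definition shift (k s : int * int) : int * int := (k.1 + s.1, k.2 + s.2).

Definition valid_shift (N : nat) (f : tpoly) (s : int * int) : bool :=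
  all (fun m => inT N (shift m.2 s)) f.

(* value of u : R^{T_N} at an integer point (only used for points of T_N) *)
Definition uval (N : nat) (u : 'I_N * 'I_N -> R) (k : int * int) : R :=
  match (insub `|k.1|%N : option 'I_N), (insub `|k.2|%N : option 'I_N) with
  | Some i, Some j => u (i, j)
  | _, _ => 0
  end.

Definition lin_term (N : nat) (f : tpoly) (u : 'I_N * 'I_N -> R)
  (s : int * int) (j : nat) : R :=
  (nth (0, (0, 0)) f j).1 + uval u (shift (nth (0, (0, 0)) f j).2 s).

Definition min_attained_twice (v : nat -> R) (m : nat) : Prop :=
  exists i j : nat, [/\ (i < m)%N, (j < m)%N, i <> j, v i = v j &
    forall l : nat, (l < m)%N -> v i <= v l].

Definition U (N : nat) (f : tpoly) : set ('I_N * 'I_N -> R) :=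
  [set u | forall s : int * int, valid_shift N f s ->
           min_attained_twice (lin_term f u s) (size f)].

Definition contains_simplex (T : finType) (S : set (T -> R)) (k : nat) : Prop :=
  exists p : 'I_k.+1 -> T -> R,
    (forall w : 'I_k.+1 -> R, (forall i, 0 <= w i) -> \sum_i w i = 1 ->
        S (fun x => \sum_i w i * p i x)) /\
    (forall c : 'I_k -> R,
        (forall x, \sum_(i < k) c i * (p (lift ord0 i) x - p ord0 x) = 0) ->
        forall i, c i = 0).

(* dimension of S (for a finite union of convex polyhedra this is the maximal
   dimension of its pieces): the largest k such that S contains a k-simplex.
   Such k is always <= #|T|. *)
Definition dimset (T : finType) (S : set (T -> R)) : nat :=
  \max_(k < #|T|.+1 | `[< contains_simplex S k >]) k.

Definition f5 : tpoly := [:: (0, (0, 0)); (0, (1, 0)); (0, (0, 1)); (0, (1, 1))].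

Definition dimU (N : nat) : nat := dimset (@U N f5).

End Tropical.

(* Main.v *)
Require Import Defs.
From HB Require Import structures.
From mathcomp Require Import all_boot all_order all_algebra.
From mathcomp Require Import all_classical all_reals all_analysis.
From mathcomp Require Import zify ring lra.
Import Order.TTheory GRing.Theory Num.Theory.
Import numFieldNormedType.Exports.
Local Open Scope ring_scope.
Local Open Scope classical_set_scope.

Section S.
Variable R : realType.

Lemma uval_ge0 N (u : 'I_N * 'I_N -> R) k : (forall x, 0 <= u x) -> 0 <= uval u k.
Proof. move=> H; rewrite /uval; case: (@insubP _ _ (ordinal N) `|k.1|%N) => [i _ _|_]; case: (@insubP _ _ (ordinal N) `|k.2|%N) => [j _ _|_] //. Qed.

Lemma uval_odd N (u : 'I_N * 'I_N -> R) k :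
  (forall x : 'I_N * 'I_N, odd x.1 -> u x = 0) -> odd `|k.1|%N -> uval u k = 0.
Proof.
move=> H ok; rewrite /uval; case: (@insubP _ _ (ordinal N) `|k.1|%N) => [i _ vi|_]; case: (@insubP _ _ (ordinal N) `|k.2|%N) => [j _ _|_] //.
by apply: H; rewrite /= vi.
Qed.

Lemma inU N (u : 'I_N * 'I_N -> R) : (forall x, 0 <= u x) ->
  (forall x : 'I_N * 'I_N, odd x.1 -> u x = 0) -> @U R N (f5 R) u.
Proof.
move=> H0 Hodd [s1 s2] /=; rewrite /valid_shift /= /inT /shift /= => /and5P[/and4P[h1 _ _ _] _ _ _ _].
rewrite add0r in h1.
have Hge : forall l, (l < 4)%N -> 0 <= lin_term (f5 R) u (s1, s2) l.
  by case=> [|[|[|[|l]]]] // _; rewrite /lin_term /= add0r uval_ge0.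
case: s1 h1 Hge => [n|n] // _ Hge.
have key : forall i j, (i < 4)%N -> (j < 4)%N -> i <> j ->
    lin_term (f5 R) u (Posz n, s2) i = 0 -> lin_term (f5 R) u (Posz n, s2) j = 0 ->
    min_attained_twice (lin_term (f5 R) u (Posz n, s2)) 4.
  move=> i j hi hj ij ei ej; exists i, j; split=> //; first by rewrite ei ej.
  by move=> l hl; rewrite ei; exact: Hge.
have e1 : forall m, (`|(1 + m%:Z)%R|)%N = m.+1 by move=> m; rewrite (_ : (1 + m%:Z)%R = (m.+1)%:Z) // -addn1 PoszD addrC.
case: (boolP (odd n)) => on.
  by apply: (key 0%N 2%N) => //; rewrite /lin_term /= /Defs.shift /= add0r uval_odd //= add0r.
by apply: (key 1%N 3%N) => //; rewrite /lin_term /= /Defs.shift /= add0r uval_odd //= e1 /= on.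
Qed.

Definition KK (N : nat) := #|{: 'I_(N./2) * 'I_N}|.

Definition pp (N : nat) (i : 'I_(KK N).+1) (x : 'I_N * 'I_N) : R :=
  if unlift ord0 i is Some l then
    (((x.1 : nat) == 2 * (@enum_val _ (mem {: 'I_(N./2) * 'I_N}) l).1)%N &&
     ((x.2 : nat) == (@enum_val _ (mem {: 'I_(N./2) * 'I_N}) l).2))%:R
  else 0.

Lemma simplex N : contains_simplex (@U R N (f5 R)) (KK N).
Proof.
exists (@pp N); split.
  move=> w w0 w1; apply: inU.
    by move=> x; apply: sumr_ge0 => i _; apply: mulr_ge0 => //; rewrite /pp; case: unlift.
  move=> x ox; apply: big1 => i _; rewrite /pp; case: unlift => [l|]; last by rewrite mulr0.
  case: eqP => [e|]; last by rewrite mulr0.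
  by move: ox; rewrite e mul2n odd_double.
move=> c Hc i0.
set e := (@enum_val _ (mem {: 'I_(N./2) * 'I_N}) i0).
have h1 : (2 * e.1 < N)%N.
  move: (ltn_ord e.1) (odd_double_half N); rewrite -mul2n => a b; lia.
have := Hc (Ordinal h1, e.2).
rewrite (bigD1 i0) //= big1 => [|i ii0].
  by rewrite /pp liftK unlift_none /= !eqxx /= subr0 mulr1 addr0.
rewrite /pp liftK unlift_none /= subr0.
case: eqP => [E|]; last by rewrite mulr0.
case: eqP => [E'|]; last by rewrite mulr0.
exfalso; move/eqP: ii0; apply; apply: enum_val_inj.
rewrite [enum_val i]surjective_pairing [enum_val i0]surjective_pairing; congr pair; apply: val_inj => /=.
  by apply/eqP; rewrite -(eqn_pmul2l (_ : 0 < 2)%N) //; apply/eqP.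
by [].
Qed.

Lemma dimlb N : (N * N./2 <= dimU R N)%N.
Proof.
have hk : (KK N < #|{: 'I_N * 'I_N}|.+1)%N.
  rewrite /KK !card_prod !card_ord ltnS; have := odd_double_half N; rewrite -mul2n; nia.
rewrite /dimU /dimset.
have -> : (N * N./2 = Ordinal hk)%N by rewrite /= /KK card_prod !card_ord mulnC.
apply: leq_bigmax_cond.
by apply/asboolP; exact: simplex.
Qed.

Lemma limpart (H : R) :
  (fun N : nat => (dimU R N)%:R / (N ^ 2)%:R : R) @ \oo --> H ->
  1 / 2 <= H /\ 0 < H.
Proof.
move=> Hc.
have hH : 1 / 2 <= H.
  apply/ler_addgt0Pr => eps eps0.
  rewrite -lerBlDr.
  have := limr_ge (x := 1/2 - eps) (cvgP _ Hc).
  rewrite (cvg_lim _ Hc) //; apply.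
  exists (Num.truncn (eps^-1)).+1 => // N /= hN.
  have d1 := dimlb N.
  have d2 : (N * N <= 2 * dimU R N + N)%N.
    have := odd_double_half N; rewrite -mul2n => h.
    have : (N * (2 * N./2) <= 2 * dimU R N)%N by rewrite mulnCA leq_mul2l d1 orbT.
    case: (odd N) h => /= h; nia.
  have d2' : (N%:R * N%:R <= 2 * (dimU R N)%:R + N%:R :> R).
    by rewrite -!natrM -natrD ler_nat.
  have ht : eps^-1 < N%:R.
    apply: (lt_le_trans (truncnS_gt _)); by rewrite ler_nat.
  have r0 : 0 < N%:R :> R by apply: lt_trans ht; rewrite invr_gt0.
  have er : 1 < eps * N%:R.
    by rewrite -ltr_pdivrMl // mulr1.
  rewrite natrX ler_pdivlMr ?exprn_gt0 //.
  set r := N%:R in d2' r0 er *; set d := (dimU R N)%:R in d2' *.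
  rewrite expr2; nra.
split => //; apply: lt_le_trans hH; by [].
Qed.
End S.

Theorem mainTheorem5 (R : realType) :
  (forall N : nat, (1 <= N)%N -> (N * N./2 <= dimU R N)%N) /\
  (forall H : R,
     (fun N : nat => (dimU R N)%:R / (N ^ 2)%:R : R) @ \oo --> H ->
     1 / 2 <= H /\ 0 < H).
Proof.
split; first by move=> N _; exact: dimlb.
exact: limpart.
Qed.
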